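(* Consider a downlink system with $M\ge 1$ single-antenna access points (APs) $\mathscr{A}=\{1,\dots,M\}$ and $N\ge 1$ single-antenna devices $\mathscr{D}=\{1,\dots,N\}$. Every AP–device link $(i,j)$ has instantaneous received SNR $g_{ij}=\rho|h_{ij}|^2$, where the fades $h_{ij}\sim\mathcal{CN}(0,1)$ are i.i.d. (Rayleigh fading) and constant over one time cycle of duration $T$, and $\rho=P_t/(W\sigma_0)$ is the common average SNR, with $P_t$ the transmit power, $W$ the bandwidth and $\sigma_0$ the noise power spectral density. With the APs transmitting cooperatively, the achievable rate of device $j$ is $\mathcal{R}_j=W\log_2\!\big(1+\sum_{i\in\mathscr{A}}g_{ij}\big)$. The controller knows all $g_{ij}$ perfectly and, in each cycle, schedules exactly $K\in\{1,\dots,N\}$ devices (a set $\mathcal{S}$ with $|\mathcal{S}|=K$, which may depend on the channel realization), each receiving a packet of $B'=\frac{N}{K}B$ bits in TDMA fashion at rate $\mathcal{R}_j$; the transmission is in outage if $\sum_{j\in\mathcal{S}} B'/\mathcal{R}_j > T$. With $B,T,W,\sigma_0,N,M,K$ fixed (zero multiplexing gain), define the diversity order $d=-\lim_{P_t\to\infty}\frac{\log \mathbb{P}_{\mathrm{out}}}{\log P_t}$. Then the maximum diversity order achievable by such a scheduler (attained by scheduling the $K$ devices with the largest $\mathcal{R}_j$) is $N-K+1$ when $M=1$, and $M(N-K+1)$ for general $M$.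
   Context: $\mathbb{P}_{\mathrm{out}}$ denotes the probability (over the fading) that the scheduled transmission in a cycle is in outage. Logarithms of rates are base 2. *)

(* Defs.v *)
From HB Require Import structures.
From mathcomp Require Import all_boot all_order all_algebra.
From mathcomp Require Import all_classical all_reals all_analysis.
From mathcomp Require Import normal_distribution.
Set Implicit Arguments. Unset Strict Implicit. Unset Printing Implicit Defensive.
Import Order.TTheory GRing.Theory Num.Theory.
Import numFieldNormedType.Exports.
Local Open Scope classical_set_scope.
Local Open Scope ring_scope.

Definition log2 {R : realType} (x : R) : R := ln x / ln 2.

Definition rate {R : realType} {M N : nat} (W : R) (g : 'I_M -> 'I_N -> R)
  (j : 'I_N) : R := W * log2 (1 + \sum_(i < M) g i j).

Definition outage {R : realType} {M N : nat} (B T W : R) (K : nat)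
  (g : 'I_M -> 'I_N -> R) (S : {set 'I_N}) : Prop :=
  T < \sum_(j in S) ((N%:R / K%:R * B) / rate W g j).

(* Instantaneous SNRs g_ij = rho |h_ij|^2 with rho = Pt/(W sigma0), where
   h_ij = hr i j + i * hi i j. *)
Definition gains {R : realType} {T : Type} {M N : nat} (W sigma0 Pt : R)
  (hr hi : 'I_M -> 'I_N -> T -> R) (w : T) : 'I_M -> 'I_N -> R :=
  fun i j => Pt / (W * sigma0) * (hr i j w ^+ 2 + hi i j w ^+ 2).

Definition scheduler (R : realType) (M N : nat) :=
  R -> ('I_M -> 'I_N -> R) -> {set 'I_N}.

Definition schedules_K {R : realType} {M N : nat} (K : nat)
  (sched : scheduler R M N) : Prop :=
  forall Pt g, #|sched Pt g| = K.

Definition topK_scheduler {R : realType} {M N : nat} (W : R) (K : nat)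
  (sched : scheduler R M N) : Prop :=
  schedules_K K sched /\
  forall Pt g (j k : 'I_N), j \in sched Pt g -> k \notin sched Pt g ->
    rate W g k <= rate W g j.

Definition measurable_scheduler {R : realType} {d} {Ω : measurableType d}
  {M N : nat} (W sigma0 : R) (hr hi : 'I_M -> 'I_N -> Ω -> R)
  (sched : scheduler R M N) : Prop :=
  forall Pt (S : {set 'I_N}),
    measurable [set w | sched Pt (gains W sigma0 Pt hr hi w) = S].

Definition Pout {R : realType} {d} {Ω : measurableType d} (P : probability Ω R)
  {M N : nat} (B T W sigma0 : R) (K : nat) (hr hi : 'I_M -> 'I_N -> Ω -> R)
  (sched : scheduler R M N) (Pt : R) : R :=
  fine (P [set w | outage B T W K (gains W sigma0 Pt hr hi w)
                     (sched Pt (gains W sigma0 Pt hr hi w))]).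

Definition mutually_independent {R : realType} {d} {Ω : measurableType d}
  (P : probability Ω R) {I : finType} (X : I -> Ω -> R) : Prop :=
  forall A : I -> set R, (forall i, measurable (A i)) ->
    P (\bigcap_(i in [set: I]) (X i @^-1` A i)) =
    (\prod_(i : I) P (X i @^-1` A i))%E.

(* Rayleigh fading: h_ij = hr_ij + i hi_ij ~ CN(0,1) i.i.d., i.e. the 2MN real
   and imaginary parts are mutually independent N(0, 1/2) random variables. *)
Definition rayleigh_fading {R : realType} {d} {Ω : measurableType d}
  (P : probability Ω R) {M N : nat} (hr hi : 'I_M -> 'I_N -> Ω -> R) : Prop :=
  let X := fun (k : 'I_M * 'I_N * bool) =>
             if k.2 then hr k.1.1 k.1.2 else hi k.1.1 k.1.2 in
  (forall k, measurable_fun setT (X k)) /\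
  mutually_independent P X /\
  (forall k (A : set R), measurable A ->
     P (X k @^-1` A) = normal_prob 0 (Num.sqrt (2^-1)) A).

(* Main.v *)
Require Import Defs.
From HB Require Import structures.
From mathcomp Require Import all_boot all_order all_algebra.
From mathcomp Require Import all_classical all_reals all_analysis.
From mathcomp Require Import normal_distribution measurable_realfun.
From mathcomp Require Import ring lra.
Set Implicit Arguments. Unset Strict Implicit. Unset Printing Implicit Defensive.
Import Order.TTheory GRing.Theory Num.Theory.
Import numFieldNormedType.Exports.
Local Open Scope classical_set_scope.
Local Open Scope ring_scope.

Lemma np_ub (R : realType) (s : R) (V : set R) : s != 0 -> measurable V ->
  (normal_prob 0 s V <= (normal_peak s)%:E * lebesgue_measure V)%E.
Proof.
move=> s0 mV; rewrite /normal_prob -integral_cst//.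
apply: ge0_le_integral => //.
- by move=> x _; rewrite lee_fin normal_pdf_ge0.
- apply/measurable_EFinP; apply: measurable_funTS; exact: measurable_normal_pdf.
- by move=> x _; rewrite lee_fin /= normal_pdf_ub.
Qed.

Definition nlow (R : realType) (s : R) := normal_peak s * expR (- (s ^+ 2 *+ 2)^-1).

Lemma np_lb (R : realType) (s : R) (V : set R) : s != 0 -> measurable V ->
  V `<=` `[-1, 1] ->
  ((nlow s)%:E * lebesgue_measure V <= normal_prob 0 s V)%E.
Proof.
move=> s0 mV V1; rewrite /normal_prob -integral_cst//.
apply: ge0_le_integral => //.
- by move=> x _; rewrite lee_fin mulr_ge0 ?normal_peak_ge0 ?expR_ge0.
- apply/measurable_EFinP; apply: measurable_funTS; exact: measurable_normal_pdf.
- move=> x Vx; rewrite lee_fin /= normal_pdfE// /=.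
  rewrite /nlow ler_wpM2l ?normal_peak_ge0// /normal_fun ler_expR subr0.
  have := V1 _ Vx; rewrite /= in_itv /= => /andP[x1 x2].
  have hx : x ^+ 2 <= 1.
    by rewrite expr2; nra.
  rewrite !mulNr lerN2.
  by rewrite -[leRHS]mul1r ler_wpM2r// invr_ge0 mulrn_wge0// sqr_ge0.
Qed.
Lemma measurable_inv (R : realType) : measurable_fun [set: R] (fun x : R => x^-1).
Proof.
have -> : (fun x : R => x^-1) = fun x => if 0 < x then expR (- ln x)
    else if x < 0 then - expR (- ln (- x)) else 0.
  apply/funext => x; case: ltgtP => hx.
  - by rewrite expRN lnK ?posrE.
  - by rewrite expRN lnK ?posrE ?oppr_gt0// invrN opprK.
  - by rewrite -hx invr0.
apply: measurable_fun_ifT.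
- by apply: measurable_fun_ltr.
- apply: measurableT_comp; first exact: measurable_expR.
  apply: measurableT_comp => //; exact: measurable_ln.
apply: measurable_fun_ifT.
- by apply: measurable_fun_ltr.
- apply: measurableT_comp => //; apply: measurableT_comp; first exact: measurable_expR.
  apply: measurableT_comp => //; apply: measurableT_comp => //; exact: measurable_ln.
- exact: measurable_cst.
Qed.

Section Meas.
Variables (R : realType) (d : measure_display) (Ω : measurableType d)
  (M N K : nat) (B T W sigma0 : R) (hr hi : 'I_M -> 'I_N -> Ω -> R).
Hypothesis mhr : forall i j, measurable_fun setT (hr i j).
Hypothesis mhi : forall i j, measurable_fun setT (hi i j).

Lemma m_rate Pt j : measurable_fun setT
  (fun w => rate W (gains W sigma0 Pt hr hi w) j).
Proof.
rewrite /rate /log2 /gains.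
apply: measurable_funM => //; apply: measurable_funM => //.
apply: measurableT_comp; first exact: measurable_ln.
apply: measurable_funD => //; apply: measurable_sum => i.
apply: measurable_funM => //; apply: measurable_funD; exact: measurable_funX.
Qed.

Lemma m_out (sched : scheduler R M N) :
  measurable_scheduler W sigma0 hr hi sched -> forall Pt,
  measurable [set w | outage B T W K (gains W sigma0 Pt hr hi w)
                     (sched Pt (gains W sigma0 Pt hr hi w))].
Proof.
move=> msch Pt.
have -> : [set w | outage B T W K (gains W sigma0 Pt hr hi w)
                     (sched Pt (gains W sigma0 Pt hr hi w))] =
  \bigcup_(S in [set: {set 'I_N}]) ([set w | sched Pt (gains W sigma0 Pt hr hi w) = S]
     `&` [set w | outage B T W K (gains W sigma0 Pt hr hi w) S]).
  apply/seteqP; split => w /=.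
    by move=> h; exists (sched Pt (gains W sigma0 Pt hr hi w)).
  by move=> [S _ [<- h]].
apply: fin_bigcup_measurable; first exact: finite_finset.
move=> S _; apply: measurableI; first exact: msch.
rewrite /outage.
set F := fun w => \sum_(j in S) (N%:R / K%:R * B / rate W (gains W sigma0 Pt hr hi w) j).
have mF : measurable_fun setT F.
  rewrite /F; under eq_fun do rewrite big_mkcond /=.
  apply: measurable_sum => j; case: (j \in S); last exact: measurable_cst.
  apply: measurable_funM => //.
  exact: (measurableT_comp (@measurable_inv R) (m_rate Pt j)).
have -> : [set w | T < F w] = setT `&` F @^-1` `]T, +oo[.
  rewrite setTI; apply/seteqP; split => w /=; rewrite in_itv /= andbT //.
exact: mF.
Qed.
End Meas.
Lemma asym_low (R : realType) (f : R -> R) (D : nat) (a : R) : 0 < a ->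
  (\forall x \near +oo, a * x^-1 ^+ D <= f x) ->
  \forall x \near +oo, - ln (f x) / ln x <= D%:R - ln a / ln x.
Proof.
move=> a0 H.
apply: (filterS2 _ _ H (nbhs_pinfty_gt (r:=1) _)) => // x hx x1.
have x0 : 0 < x by apply: lt_trans x1.
have lx : 0 < ln x by rewrite ln_gt0.
have p0 : 0 < a * x^-1 ^+ D by rewrite mulr_gt0// exprn_gt0// invr_gt0.
have hl : ln (a * x^-1 ^+ D) <= ln (f x).
  by rewrite ler_ln// posrE (lt_le_trans p0).
rewrite lnM ?posrE ?exprn_gt0 ?invr_gt0// lnXn ?invr_gt0// lnV ?posrE// in hl.
rewrite ler_pdivrMr// mulrBl divfK ?gt_eqF//.
move: hl.
rewrite -mulr_natr; lra.
Qed.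

Lemma asym_up (R : realType) (f : R -> R) (D : nat) (b : R) : 0 < b ->
  (\forall x \near +oo, 0 < f x <= b * x^-1 ^+ D) ->
  \forall x \near +oo, D%:R - ln b / ln x <= - ln (f x) / ln x.
Proof.
move=> b0 H.
apply: (filterS2 _ _ H (nbhs_pinfty_gt (r:=1) _)) => // x /andP[f0 hx] x1.
have x0 : 0 < x by apply: lt_trans x1.
have lx : 0 < ln x by rewrite ln_gt0.
have p0 : 0 < b * x^-1 ^+ D by rewrite mulr_gt0// exprn_gt0// invr_gt0.
have hl : ln (f x) <= ln (b * x^-1 ^+ D).
  by rewrite ler_ln// posrE.
rewrite lnM ?posrE ?exprn_gt0 ?invr_gt0// lnXn ?invr_gt0// lnV ?posrE// in hl.
rewrite ler_pdivlMr// mulrBl divfK ?gt_eqF//.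
move: hl; rewrite -mulr_natr; lra.
Qed.

Lemma ln_big (R : realType) (C : R) : 0 <= C ->
  \forall x \near +oo, 1 < x /\ C < ln x.
Proof.
move=> C0; apply: filterS (nbhs_pinfty_gt (r := expR C) _) => // x hx.
have x1 : 1 < x.
  by apply: le_lt_trans hx; rewrite -expR0 ler_expR.
split => //.
by rewrite -ltr_expR lnK// posrE (lt_trans _ x1).
Qed.

Lemma dv_conv_both (R : realType) (f : R -> R) (D : nat) (a b : R) : 0 < a -> 0 < b ->
  (\forall x \near +oo, a * x^-1 ^+ D <= f x) ->
  (\forall x \near +oo, 0 < f x <= b * x^-1 ^+ D) ->
  - ln (f x) / ln x @[x --> +oo] --> (D%:R : R).
Proof.
move=> a0 b0 Hl Hu; apply/cvgrPdist_le => e e0.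
have C0 : 0 <= (`|ln a| + `|ln b|) / e by rewrite divr_ge0 ?addr_ge0// ltW.
apply: (filterS3 _ _ (asym_low a0 Hl) (asym_up b0 Hu) (ln_big C0)) => x h1 h2 [x1 h3].
have L0 : 0 < ln x by rewrite ln_gt0.
rewrite ltr_pdivrMr// in h3.
have ha : - e <= ln a / ln x.
  rewrite ler_pdivlMr// mulNr.
  have := ler_normr (ln a) (ln a); rewrite lexx /= => _.
  have := ler_norml (ln a) `|ln a|; rewrite lexx => /esym /andP[+ _].
  have : 0 <= `|ln b| by [].
  lra.
have hb : ln b / ln x <= e.
  rewrite ler_pdivrMr//.
  have := ler_norml (ln b) `|ln b|; rewrite lexx => /esym /andP[_ +].
  have : 0 <= `|ln a| by [].
  lra.
rewrite ler_norml; apply/andP; split; lra.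
Qed.

Lemma dv_conv_le (R : realType) (f : R -> R) (D : nat) (a : R) (dv : \bar R) : 0 < a ->
  (\forall x \near +oo, a * x^-1 ^+ D <= f x) ->
  ((- ln (f x) / ln x)%:E @[x --> +oo] --> dv) ->
  (dv <= (D%:R)%:E)%E.
Proof.
move=> a0 Hl Hc; apply/lee_addgt0Pr => e e0.
have C0 : 0 <= `|ln a| / e by rewrite divr_ge0// ltW.
apply: (cvge_le _ Hc).
apply: (filterS2 _ _ (asym_low a0 Hl) (ln_big C0)) => x h1 [x1 h3].
have L0 : 0 < ln x by rewrite ln_gt0.
rewrite ltr_pdivrMr// in h3.
have ha : - e <= ln a / ln x.
  rewrite ler_pdivlMr// mulNr.
  have := ler_norml (ln a) `|ln a|; rewrite lexx => /esym /andP[+ _].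
  lra.
rewrite -EFinD lee_fin; lra.
Qed.

Lemma lee_prod_ge0 (R : realType) (I : Type) (s : seq I) (f g : I -> \bar R) :
  (forall i, (0 <= f i)%E /\ (f i <= g i)%E) ->
  (\prod_(i <- s) f i <= \prod_(i <- s) g i)%E.
Proof.
move=> h; elim: s => [|a s IH]; first by rewrite !big_nil.
rewrite !big_cons; apply: lee_pmul => //; first by case: (h a).
- by apply: prode_ge0 => i _; case: (h i).
- by case: (h a).
Qed.

Lemma prod_if (R : realType) (M N : nat) (U : {set 'I_N}) (c : R) :
  \prod_(k : 'I_M * 'I_N * bool) (if k.1.2 \in U then c else 1) = c ^+ (M * #|U| * 2).
Proof.
rewrite -big_mkcond /= prodr_const.
congr (_ ^+ _).
rewrite (@eq_card _ _ [predX [predX [pred _ : 'I_M | true] & U] & [pred _ : bool | true]]); last first.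
  by move=> [[i j] b]; rewrite !inE /= andbT.
rewrite (cardX [predX [pred _ : 'I_M | true] & U]) cardX.
have -> : #|[pred _ : 'I_M | true]| = M by rewrite -[RHS](card_ord M); apply: eq_card.
have -> : #|[pred _ : bool | true]| = 2%N by rewrite -card_bool; apply: eq_card.
by [].
Qed.

Lemma np_itv_ub (R : realType) (s a : R) : s != 0 -> 0 <= a ->
  (normal_prob 0 s `[(- a)%R, a] <= (normal_peak s * (a *+ 2))%:E)%E.
Proof.
move=> s0 a0; apply: le_trans (np_ub s0 _) _ => //.
rewrite lebesgue_measure_itv /=; case: ifP => _.
  by rewrite -EFinD -EFinM lee_fin opprK -mulr2n.
by rewrite mule0 lee_fin mulr_ge0 ?normal_peak_ge0 ?mulrn_wge0.
Qed.

Lemma np_oc_lb (R : realType) (sg s : R) : sg != 0 -> 0 < s <= 1 ->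
  ((nlow sg * s)%:E <= normal_prob 0 sg `]0%R, s])%E.
Proof.
move=> s0 /andP[sp s1]; apply: le_trans (np_lb s0 _ _) => //.
  by rewrite lebesgue_measure_itv /= lte_fin sp -EFinD -EFinM subr0.
move=> x /=; rewrite !in_itv /= => /andP[x0 x1]; apply/andP; split.
  by apply: le_trans (ltW x0); rewrite lerN10.
exact: le_trans x1 s1.
Qed.

Lemma sum_le_const (R : realType) (I : Type) (s : seq I) (f : I -> \bar R) (c : R) :
  (forall i, (f i <= c%:E)%E) -> (\sum_(i <- s) f i <= (c *+ size s)%:E)%E.
Proof.
move=> h; elim: s => [|a s IH]; first by rewrite big_nil.
by rewrite big_cons /= mulrS EFinD; apply: leeD.
Qed.

Lemma union_bd (R : realType) d (Ω : measurableType d) (P : probability Ω R)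
  (I : finType) (A : set Ω) (F : I -> set Ω) (c : R) :
  measurable A -> (forall i, measurable (F i)) ->
  A `<=` \bigcup_(i in [set: I]) F i -> (forall i, (P (F i) <= c%:E)%E) ->
  (P A <= (c *+ size (finmap.enum_fset (fset_set [set: I])))%:E)%E.
Proof.
move=> mA mF AF hF.
apply: le_trans (content_sub_fsum P finite_finset (fun i _ => mF i) mA AF) _.
rewrite fsbig_finite //=.
exact: sum_le_const.
Qed.

Lemma P_fin (R : realType) d (Ω : measurableType d) (P : probability Ω R) (A : set Ω) :
  measurable A -> P A = (fine (P A))%:E.
Proof.
move=> mA; rewrite fineK // ge0_fin_numE //.
by apply: le_lt_trans (probability_le1 P mA) _; rewrite ltry.
Qed.

Section Core.
Variables (R : realType) (d : measure_display) (Ω : measurableType d)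
  (P : probability Ω R) (M N : nat) (hr hi : 'I_M -> 'I_N -> Ω -> R).
Hypothesis RF : rayleigh_fading P hr hi.

Definition Xf (k : 'I_M * 'I_N * bool) : Ω -> R :=
  if k.2 then hr k.1.1 k.1.2 else hi k.1.1 k.1.2.

Definition sg : R := Num.sqrt (2^-1).

Lemma sg_neq0 : sg != 0.
Proof. by rewrite /sg gt_eqF // sqrtr_gt0 invr_gt0. Qed.

Lemma mX k : measurable_fun setT (Xf k).
Proof. by case: RF => h _; exact: h. Qed.

Lemma mhr i j : measurable_fun setT (hr i j).
Proof. exact: (mX (i, j, true)). Qed.

Lemma mhi i j : measurable_fun setT (hi i j).
Proof. exact: (mX (i, j, false)). Qed.

Lemma P_cap (A : 'I_M * 'I_N * bool -> set R) : (forall k, measurable (A k)) ->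
  P (\bigcap_(k in [set: _]) (Xf k @^-1` A k)) = (\prod_k normal_prob 0 sg (A k))%E.
Proof.
move=> mA; case: RF => _ [ind law]; rewrite /Xf ind //.
by apply: eq_bigr => k _; exact: law.
Qed.

Lemma m_cap (A : 'I_M * 'I_N * bool -> set R) : (forall k, measurable (A k)) ->
  measurable (\bigcap_(k in [set: _]) (Xf k @^-1` A k)).
Proof.
move=> mA; apply: fin_bigcap_measurable; first exact: finite_finset.
move=> k _; rewrite -[_ @^-1` _]setTI; exact: mX.
Qed.

Definition Aub (U : {set 'I_N}) (t : R) (k : 'I_M * 'I_N * bool) : set R :=
  if k.1.2 \in U then `[- Num.sqrt t, Num.sqrt t]%classic else setT.

Lemma P_cap_ub (U : {set 'I_N}) (t : R) : 0 <= t ->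
  (P (\bigcap_(k in [set: _]) (Xf k @^-1` Aub U t k)) <=
   ((normal_peak sg * (Num.sqrt t *+ 2)) ^+ (M * #|U| * 2))%:E)%E.
Proof.
move=> t0; rewrite P_cap; last by move=> k; rewrite /Aub; case: ifP.
rewrite -prod_if -prodEFin; apply: lee_prod_ge0 => k; rewrite /Aub.
case: ifP => _; split => //.
- by apply: np_itv_ub; [exact: sg_neq0|exact: sqrtr_ge0].
- by rewrite probability_setT.
Qed.

Definition Alb (U : {set 'I_N}) (s : R) (k : 'I_M * 'I_N * bool) : set R :=
  if k.1.2 \in U then `]0, s]%classic else setT.

Lemma P_cap_lb (U : {set 'I_N}) (s : R) : 0 < s <= 1 ->
  (((nlow sg * s) ^+ (M * #|U| * 2))%:E <=
   P (\bigcap_(k in [set: _]) (Xf k @^-1` Alb U s k)))%E.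
Proof.
move=> s01; rewrite P_cap; last by move=> k; rewrite /Alb; case: ifP.
rewrite -prod_if -prodEFin; apply: lee_prod_ge0 => k; rewrite /Alb.
case: ifP => _; split => //.
- rewrite lee_fin mulr_ge0 //; last by case/andP: s01 => /ltW.
  by rewrite mulr_ge0 ?normal_peak_ge0 ?expR_ge0.
- by apply: np_oc_lb => //; exact: sg_neq0.
- by rewrite probability_setT.
Qed.
End Core.
Lemma rate_lt (R : realType) (W r x : R) : 0 < W -> 0 <= x ->
  (W * log2 (1 + x) < r) = (x < expR (r * ln 2 / W) - 1).
Proof.
move=> W0 x0; rewrite /log2.
have l2 : 0 < ln (2 : R) by rewrite ln_gt0 // ltr1n.
have -> : (W * (ln (1 + x) / ln 2) < r) = (ln (1 + x) < r * ln 2 / W).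
  rewrite mulrA ltr_pdivrMr // ltr_pdivlMr // mulrC.
  by [].
rewrite -ltr_expR lnK ?posrE; last by lra.
apply/idP/idP; lra.
Qed.

Section Det.
Variables (R : realType) (T0 : Type) (M N K : nat) (B T W sigma0 : R)
  (hr hi : 'I_M -> 'I_N -> T0 -> R).
Hypotheses (K1 : (1 <= K)%N) (KN : (K <= N)%N) (B0 : 0 < B) (T0p : 0 < T)
  (W0 : 0 < W) (s0 : 0 < sigma0).

Definition Zs j w := \sum_(i < M) (hr i j w ^+ 2 + hi i j w ^+ 2).
Definition Bp : R := N%:R / K%:R * B.

Lemma Zs_ge0 j w : 0 <= Zs j w.
Proof. by apply: sumr_ge0 => i _; rewrite addr_ge0 ?sqr_ge0. Qed.

Lemma Bp_gt0 : 0 < Bp.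
Proof.
rewrite /Bp mulr_gt0 // divr_gt0 // ltr0n //.
by apply: leq_trans KN.
Qed.

Lemma rate_eq Pt w j : rate W (gains W sigma0 Pt hr hi w) j =
  W * log2 (1 + Pt / (W * sigma0) * Zs j w).
Proof. by rewrite /rate /gains /Zs big_distrr. Qed.

Lemma rate_ge0 Pt w j : 0 <= Pt -> 0 <= rate W (gains W sigma0 Pt hr hi w) j.
Proof.
move=> P0; rewrite rate_eq; apply: mulr_ge0; first exact: ltW.
rewrite /log2; apply: divr_ge0.
  by rewrite ln_ge0 // lerDl mulr_ge0 ?Zs_ge0 // divr_ge0 // ltW // mulr_gt0.
by rewrite ltW // ln_gt0 // ltr1n.
Qed.

Definition c1 : R := expR (K%:R * Bp / T * ln 2 / W) - 1.
Definition c2 : R := expR (Bp / T * ln 2 / W) - 1.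

Lemma topK_incl (sched : scheduler R M N) Pt w : topK_scheduler W K sched -> 0 < Pt ->
  outage B T W K (gains W sigma0 Pt hr hi w) (sched Pt (gains W sigma0 Pt hr hi w)) ->
  exists U : {set 'I_N}, #|U| = (N - K + 1)%N /\ forall j, j \in U -> Pt / (W * sigma0) * Zs j w < c1.
Proof.
move=> [hK htop] Pt0; set g := gains W sigma0 Pt hr hi w; set S := sched Pt g => hout.
have hK0 : 0 < K%:R :> R by rewrite ltr0n.
have [j jS hj] : exists2 j, j \in S & T / K%:R < Bp / rate W g j.
  case: (boolP [exists j in S, T / K%:R < Bp / rate W g j]).
    by move=> /exists_inP [j jS hj]; exists j.
  move=> /exists_inPn h; exfalso.
  have : \sum_(j in S) Bp / rate W g j <= \sum_(j in S) T / K%:R.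
    by apply: ler_sum => j jS; rewrite leNgt h.
  rewrite sumr_const (hK Pt g) -[_ *+ K]mulr_natr divfK ?gt_eqF //.
  move: hout; rewrite /outage -/Bp.
  lra.
have r0 : 0 < rate W g j.
  have : 0 < Bp / rate W g j by apply: lt_trans hj; rewrite divr_gt0.
  by rewrite pmulr_rgt0 ?Bp_gt0 // invr_gt0.
have rj : rate W g j < K%:R * Bp / T.
  rewrite ltr_pdivlMr // in hj.
  rewrite ltr_pdivlMr //.
  have -> : rate W g j * T = K%:R * (T / K%:R * rate W g j).
    by field; rewrite gt_eqF.
  by rewrite ltr_pM2l.
exists (j |: ~: S); split.
  rewrite cardsU1 !inE jS /= cardsCs finset.setCK card_ord (hK Pt g).
  by rewrite addnC.
move=> k kU.
have rk : rate W g k < K%:R * Bp / T.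
  move: kU; rewrite !inE => /orP[/eqP -> //| kS].
  exact: le_lt_trans (htop _ _ _ _ jS kS) rj.
rewrite rate_eq rate_lt // in rk.
by rewrite mulr_ge0 ?Zs_ge0 // divr_ge0 ?ltW // mulr_gt0.
Qed.

Lemma low_incl (sched : scheduler R M N) Pt w (U0 : {set 'I_N}) :
  schedules_K K sched -> 0 < Pt -> #|U0| = (N - K + 1)%N ->
  (forall j, j \in U0 -> 0 < Zs j w /\ Pt / (W * sigma0) * Zs j w < c2) ->
  outage B T W K (gains W sigma0 Pt hr hi w) (sched Pt (gains W sigma0 Pt hr hi w)).
Proof.
move=> hK Pt0 hU hZ; set g := gains W sigma0 Pt hr hi w; set S := sched Pt g.
have [j jS jU] : exists2 j, j \in S & j \in U0.
  case: (boolP [exists j in S, j \in U0]) => [/exists_inP[j ? ?]|/exists_inPn h].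
    by exists j.
  exfalso.
  have hd : S :&: U0 = finset.set0.
    apply/setP => x; rewrite !inE; case: (boolP (x \in S)) => //= xS.
    exact: negbTE (h x xS).
  have := cardsU S U0; rewrite hd cards0 subn0 (hK Pt g) hU => hc.
  have := max_card (mem (S :|: U0)); rewrite hc card_ord.
  by rewrite addnA subnKC // addn1 ltnn.
have [Zp Zl] := hZ j jU.
have rho0 : 0 < Pt / (W * sigma0) by rewrite divr_gt0 // mulr_gt0.
have x0 : 0 < Pt / (W * sigma0) * Zs j w by rewrite mulr_gt0.
have rl : rate W g j < Bp / T by rewrite rate_eq rate_lt // ltW.
have rp : 0 < rate W g j.
  rewrite rate_eq mulr_gt0 // /log2 divr_gt0 //; last by rewrite ln_gt0 // ltr1n.
  by rewrite ln_gt0 // ltrDl.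
have tj : T < Bp / rate W g j.
  rewrite ltr_pdivlMr //; rewrite ltr_pdivlMr // in rl.
  by rewrite mulrC.
rewrite /outage -/Bp (bigD1 j) //=; apply: lt_le_trans tj _; rewrite lerDl.
apply: sumr_ge0 => k _; apply: divr_ge0; first exact: ltW Bp_gt0.
exact: rate_ge0 (ltW Pt0).
Qed.
End Det.


Section Main.
Variables (R : realType) (d : measure_display) (Ω : measurableType d)
  (P : probability Ω R) (M N K : nat) (B T W sigma0 : R)
  (hr hi : 'I_M -> 'I_N -> Ω -> R).
Hypotheses (M1 : (1 <= M)%N) (K1 : (1 <= K)%N) (KN : (K <= N)%N) (B0 : 0 < B)
  (T0p : 0 < T) (W0 : 0 < W) (s0 : 0 < sigma0) (RF : rayleigh_fading P hr hi).

Lemma expR_gt1 (x : R) : 0 < x -> 0 < expR x - 1.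
Proof.
move=> x0; rewrite subr_gt0 -expR0 ltr_expR //.
Qed.

Lemma c1_gt0 : 0 < c1 N K B T W.
Proof.
apply: expR_gt1; apply: divr_gt0 => //; apply: mulr_gt0; last by rewrite ln_gt0 ?ltr1n.
apply: divr_gt0 => //; apply: mulr_gt0; first by rewrite ltr0n.
exact: (Bp_gt0 K1 KN B0).
Qed.

Lemma c2_gt0 : 0 < c2 N K B T W.
Proof.
apply: expR_gt1; apply: divr_gt0 => //; apply: mulr_gt0; last by rewrite ln_gt0 ?ltr1n.
apply: divr_gt0 => //; exact: (Bp_gt0 K1 KN B0).
Qed.

Lemma Dn_le : (N - K + 1 <= N)%N.
Proof. by rewrite addn1 ltn_subrL K1 (leq_trans K1 KN). Qed.

Lemma Xf_le_Zs i j b w : Xf hr hi (i, j, b) w ^+ 2 <= Zs hr hi j w.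
Proof.
rewrite /Zs (bigD1 i) //= -[X in X <= _]addr0; apply: lerD; last first.
  by apply: sumr_ge0 => k _; rewrite addr_ge0 ?sqr_ge0.
by rewrite /Xf; case: b => /=; [rewrite lerDl | rewrite lerDr]; rewrite sqr_ge0.
Qed.

Lemma LOW (sched : scheduler R M N) : schedules_K K sched ->
  measurable_scheduler W sigma0 hr hi sched ->
  exists2 a : R, 0 < a & \forall x \near +oo,
    a * x^-1 ^+ (M * (N - K + 1)) <= Pout P B T W sigma0 K hr hi sched x.
Proof.
move=> hK msch.
set Dn := (N - K + 1)%N.
pose U0 : {set 'I_N} := [set widen_ord Dn_le i | i : 'I_Dn].
have hU0 : #|U0| = Dn.
  by rewrite card_imset ?card_ord // => a b /(congr1 val) /= /val_inj.
pose u := c2 N K B T W * (W * sigma0) / (4 * M%:R).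
have u0 : 0 < u by rewrite divr_gt0 ?mulr_gt0 ?c2_gt0 ?ltr0n.
have nl0 : 0 < nlow (sg R).
  by rewrite /nlow mulr_gt0 ?expR_gt0 // normal_peak_gt0 // sg_neq0.
exists ((nlow (sg R) ^+ 2 * u) ^+ (M * Dn)).
  by rewrite exprn_gt0 // mulr_gt0 // exprn_gt0.
apply: filterS (nbhs_pinfty_gt (r := u) _) => [x ux|]; last exact: num_real.
have x0 : 0 < x := lt_trans u0 ux.
pose s := Num.sqrt (u / x).
have s2 : s ^+ 2 = u / x by rewrite sqr_sqrtr // divr_ge0 ?ltW.
have sp : 0 < s by rewrite sqrtr_gt0 divr_gt0.
have s1 : s <= 1 by rewrite -sqrtr1 ler_wsqrtr // ler_pdivrMr // mul1r ltW.
have mE := @m_out R d Ω M N K B T W sigma0 hr hi (mhr RF) (mhi RF) sched msch x.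
rewrite /Pout -lee_fin -(P_fin P mE).
have eq : (nlow (sg R) * s) ^+ (M * #|U0| * 2) =
    (nlow (sg R) ^+ 2 * u) ^+ (M * Dn) * x^-1 ^+ (M * Dn).
  rewrite hU0 [(M * Dn * 2)%N]mulnC exprM exprMn -!exprMn; congr (_ ^+ _).
  by rewrite mulrACA -!expr2 s2 mulrA.
rewrite -eq.
apply: le_trans (P_cap_lb RF U0 (s := s) _) _; first by rewrite sp s1.
apply: le_measure; rewrite ?inE //; first by apply: (m_cap RF) => k; rewrite /Alb; case: ifP.
move=> w Hw /=.
apply: (low_incl K1 KN B0 T0p W0 s0 hK x0 hU0) => j jU.
have hX : forall i b, 0 < Xf hr hi (i, j, b) w <= s.
  move=> i b; have := Hw (i, j, b) I; rewrite /Alb /= jU /= in_itv /=.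
  by [].
split.
  rewrite /Zs (bigD1 (Ordinal M1)) //=.
  have h1 := hX (Ordinal M1) true; have h2 := hX (Ordinal M1) false.
  move: h1 h2; rewrite /Xf /= => /andP[a1 _] /andP[a2 _].
  have : 0 <= \sum_(i < M | i != Ordinal M1) (hr i j w ^+ 2 + hi i j w ^+ 2).
    by apply: sumr_ge0 => i _; rewrite addr_ge0 ?sqr_ge0.
  have : 0 < hr (Ordinal M1) j w ^+ 2 by rewrite exprn_gt0.
  have : 0 < hi (Ordinal M1) j w ^+ 2 by rewrite exprn_gt0.
  lra.
have hZ : Zs hr hi j w <= (s ^+ 2 + s ^+ 2) *+ M.
  rewrite -[M in _ *+ M]card_ord -sumr_const /Zs; apply: ler_sum => i _.
  have := hX i true; have := hX i false; rewrite /Xf /= => /andP[a1 a2] /andP[b1 b2].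
  by apply: lerD; rewrite !expr2; nra.
have rho0 : 0 < x / (W * sigma0) by rewrite divr_gt0 // mulr_gt0.
apply: le_lt_trans (ler_wpM2l (ltW rho0) hZ) _.
rewrite s2.
have -> : x / (W * sigma0) * ((u / x + u / x) *+ M) = c2 N K B T W / 2.
  rewrite /u -mulr_natr; field.
  by rewrite !gt_eqF ?ltr0n.
have := c2_gt0; lra.
Qed.

Lemma UP (sched : scheduler R M N) : topK_scheduler W K sched ->
  measurable_scheduler W sigma0 hr hi sched ->
  exists2 b : R, 0 < b & \forall x \near +oo,
    Pout P B T W sigma0 K hr hi sched x <= b * x^-1 ^+ (M * (N - K + 1)).
Proof.
move=> htop msch.
set Dn := (N - K + 1)%N.
pose pk := normal_peak (sg R).
pose A0 := pk ^+ 2 * 4 * (c1 N K B T W * (W * sigma0)).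
have A00 : 0 <= A0.
  rewrite /A0; apply: mulr_ge0; first by apply: mulr_ge0; [exact: sqr_ge0|by []].
  by apply: mulr_ge0; [exact: ltW c1_gt0 | exact: ltW (mulr_gt0 W0 s0)].
pose L := size (finmap.enum_fset (fset_set [set: {set 'I_N}])).
exists (A0 ^+ (M * Dn) *+ L + 1).
  have : 0 <= A0 ^+ (M * Dn) *+ L by rewrite mulrn_wge0 // exprn_ge0.
  lra.
apply: filterS (nbhs_pinfty_gt (r := 0) _) => [x x0|]; last exact: num_real.
pose t := c1 N K B T W * (W * sigma0) / x.
have t0 : 0 <= t by rewrite /t divr_ge0 ?mulr_ge0 ?ltW ?c1_gt0.
have mE := @m_out R d Ω M N K B T W sigma0 hr hi (mhr RF) (mhi RF) sched msch x.
rewrite /Pout -lee_fin -(P_fin P mE).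
pose F (U : {set 'I_N}) := if #|U| == Dn then
  \bigcap_(k in [set: _]) (Xf hr hi k @^-1` Aub U t k) else set0.
have mF : forall U, measurable (F U).
  move=> U; rewrite /F; case: ifP => _ //.
  by apply: (m_cap RF) => k; rewrite /Aub; case: ifP.
have cb0 : 0 <= (pk * (Num.sqrt t *+ 2)) ^+ (M * Dn * 2).
  by rewrite exprn_ge0 // mulr_ge0 ?normal_peak_ge0 ?mulrn_wge0 ?sqrtr_ge0.
apply: le_trans (@union_bd R d Ω P _ _ F ((pk * (Num.sqrt t *+ 2)) ^+ (M * Dn * 2)) mE mF _ _) _.
- move=> w /= hw.
  have [U [hU hj]] := topK_incl K1 KN B0 T0p W0 s0 htop x0 hw.
  exists U => //; rewrite /F hU eqxx.
  move=> [[i j] b] _ /=; rewrite /Aub; case: ifP => jU //=.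
  rewrite in_itv /= -ler_norml.
  have hZ : Zs hr hi j w <= t.
    have h := hj j jU; rewrite /t ler_pdivlMr //.
    have e : Zs hr hi j w * x = x / (W * sigma0) * Zs hr hi j w * (W * sigma0).
      by field; rewrite !gt_eqF.
    by rewrite e ltW // ltr_pM2r // mulr_gt0.
  rewrite -sqrtr_sqr; apply: ler_wsqrtr.
  exact: le_trans (Xf_le_Zs i j b w) hZ.
- move=> U; rewrite /F; case: eqP => hU.
    have h := P_cap_ub RF U t0; rewrite -hU /pk; apply: le_trans h _; by rewrite lee_fin.
  have -> : P set0 = 0%E by exact: measure0.
  by rewrite lee_fin.
have ecb : (pk * (Num.sqrt t *+ 2)) ^+ (M * Dn * 2) = A0 ^+ (M * Dn) * x^-1 ^+ (M * Dn).
  rewrite [(M * Dn * 2)%N]mulnC exprM.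
  have -> : (pk * (Num.sqrt t *+ 2)) ^+ 2 = A0 * x^-1.
    rewrite exprMn -mulr_natr exprMn sqr_sqrtr // /A0 /t.
    move: (pk) (c1 N K B T W * (W * sigma0)) => p c.
    ring.
  by rewrite exprMn.
rewrite ecb lee_fin -mulrnAl -/L mulrDl mul1r lerDl.
by rewrite exprn_ge0 // invr_ge0 ltW.
Qed.
End Main.

Unset Implicit Arguments.
Set Strict Implicit.

Theorem proposition1 (R : realType) (d : measure_display) (Ω : measurableType d)
  (P : probability Ω R) (M N K : nat) (B T W sigma0 : R)
  (hr hi : 'I_M -> 'I_N -> Ω -> R) :
  (1 <= M)%N -> (1 <= K)%N -> (K <= N)%N ->
  0 < B -> 0 < T -> 0 < W -> 0 < sigma0 ->
  rayleigh_fading P hr hi ->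
  (* the top-K (largest-rate) scheduler attains diversity order M(N-K+1) *)
  (forall sched : scheduler R M N,
     topK_scheduler W K sched -> measurable_scheduler W sigma0 hr hi sched ->
     - ln (Pout P B T W sigma0 K hr hi sched Pt) / ln Pt @[Pt --> +oo]
       --> ((M * (N - K + 1))%N%:R : R)) /\
  (* no scheduler achieves a larger diversity order *)
  (forall sched : scheduler R M N,
     schedules_K K sched -> measurable_scheduler W sigma0 hr hi sched ->
     forall dv : \bar R,
       ((- ln (Pout P B T W sigma0 K hr hi sched Pt) / ln Pt)%:E @[Pt --> +oo]
          --> dv) ->
       (dv <= ((M * (N - K + 1))%N%:R)%:E)%E).
Proof.
move=> M1 K1 KN B0 T0p W0 s0 RF; split.
- move=> sched htop msch.
  have [a a0 Ha] := LOW M1 K1 KN B0 T0p W0 s0 RF htop.1 msch.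
  have [b b0 Hb] := UP K1 KN B0 T0p W0 s0 RF htop msch.
  apply: (dv_conv_both a0 b0 Ha).
  apply: (filterS3 _ _ Ha Hb (nbhs_pinfty_gt (r := 0) _)) => [x h1 h2 x0|]; last first.
    exact: num_real.
  apply/andP; split => //; apply: lt_le_trans h1.
  by rewrite mulr_gt0 // exprn_gt0 // invr_gt0.
- move=> sched hK msch dv hc.
  have [a a0 Ha] := LOW M1 K1 KN B0 T0p W0 s0 RF hK msch.
  exact: dv_conv_le a0 Ha hc.
Qed.
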